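(* The anticyclic action of $\mathfrak{S}_{n+1}$ on signed shrubs on $\{1,\dots,n\}$ preserves the number of equivalence classes of ramified vertices: if $\sigma\cdot(\varepsilon,P)=(\varepsilon',P')$ then $|\operatorname{Ram}(P)|=|\operatorname{Ram}(P')|$.
   Context: A shrub $P$ on a finite set $I$ is a set $E$ of edges (unordered pairs of distinct elements of $I$) with a height function $h_P:I\to\mathbb{N}$; $j$ covers $i$ if $\{i,j\}\in E$ and $h_P(j)=h_P(i)+1$. Axioms: (1) edges join vertices whose heights differ by $1$; (2) every vertex of positive height covers some vertex; (3) no four distinct $a,b,c,d$ with $a$ covering $b$ and $c$, $c$ covering $d$, $\{b,d\}\notin E$; (4) no five distinct $a,b,c,d,e$ with $a$ covering $c,d$, $b$ covering $d,e$, $\{a,e\}\notin E$, $\{b,c\}\notin E$. A vertex is ramified if it covers at least two distinct vertices; two ramified vertices are equivalent if they cover the same set of vertices; $\operatorname{Ram}(P)$ is the set of equivalence classes, and $r^-$ the common set of vertices covered by elements of $r\in\operatorname{Ram}(P)$. For $S\subseteq I$, $\langle S\rangle_P$ is the set of $j$ such that every descending path from $j$ to height $0$ meets $S$; with $u[S]=\sum_{k\in S}u_k$, $f_P=\prod_{i\in I}u[\langle\{i\}\rangle_P]^{-1}\prod_{r\in\operatorname{Ram}(P)}u[\langle r^-\rangle_{P\setminus\langle r\rangle_P}]/u[\langle r^-\rangle_P]$, where $P\setminus\langle r\rangle_P$ is the restriction of $P$ to $I\setminus\langle r\rangle_P$. $\mathfrak{S}_{n+1}$ acts on $\mathbb{Q}(u_1,\dots,u_n)$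 by setting $u_0=-(u_1+\dots+u_n)$, permuting $u_0,\dots,u_n$ and re-expressing in $u_1,\dots,u_n$. Signed shrubs are pairs $(\varepsilon,P)$ with $\varepsilon=\pm1$; the map $(\varepsilon,P)\mapsto\varepsilon f_P$ is injective and its image is stable under $\mathfrak{S}_{n+1}$, and the anticyclic action is defined by $\sigma\cdot(\varepsilon,P)=(\varepsilon',P')$ where $\varepsilon'f_{P'}=\sigma\cdot(\varepsilon f_P)$. *)

(* Defs.v *)
From HB Require Import structures.
From mathcomp Require Import all_boot all_order all_algebra all_fingroup.
From mathcomp Require Import mpoly.
Set Implicit Arguments.
Unset Strict Implicit.
Unset Printing Implicit Defensive.
Import GRing.Theory.
Local Open Scope ring_scope.

Notation "x %:F" := (@FracField.tofrac _ x) : ring_scope.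

(* Vertex set I = {1,...,n} is encoded as 'I_n : vertex i : 'I_n stands for
   the element i+1, and carries the variable u_{i+1} = 'X_i of {mpoly rat[n]}. *)

Section Shrubs.
Variable n : nat.
Local Notation V := 'I_n.

(* A shrub: a set of edges (symmetric irreflexive relation = unordered pairs
   of distinct elements) together with a height function satisfying (1)-(4). *)
Record shrub := Shrub {
  sh_edge : rel V;
  sh_height : V -> nat;
  sh_sym : ssrbool.symmetric sh_edge;
  sh_irr : irreflexive sh_edge;
  sh_ax1 : forall i j, sh_edge i j ->
     (sh_height j == (sh_height i).+1) || (sh_height i == (sh_height j).+1);
  sh_ax2 : forall j, (0 < sh_height j)%N ->
     exists i, sh_edge i j && (sh_height j == (sh_height i).+1);
  sh_ax3 : forall a b c d, uniq [:: a; b; c; d] ->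
     sh_edge b a && (sh_height a == (sh_height b).+1) ->
     sh_edge c a && (sh_height a == (sh_height c).+1) ->
     sh_edge d c && (sh_height c == (sh_height d).+1) ->
     sh_edge b d;
  sh_ax4 : forall a b c d e, uniq [:: a; b; c; d; e] ->
     sh_edge c a && (sh_height a == (sh_height c).+1) ->
     sh_edge d a && (sh_height a == (sh_height d).+1) ->
     sh_edge d b && (sh_height b == (sh_height d).+1) ->
     sh_edge e b && (sh_height b == (sh_height e).+1) ->
     sh_edge a e || sh_edge b c
}.

Variable P : shrub.

Definition covers : rel V :=
  fun j i => sh_edge P i j && (sh_height P j == (sh_height P i).+1).

Definition down (v : V) : {set V} := [set i | covers v i].

Definition ramified (v : V) : bool := (1 < #|down v|)%N.

Definition Ram : {set {set V}} :=
  [set [set w | ramified w && (down w == down v)] | v in [set v | ramified v]].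

(* r^- : the common set of vertices covered by elements of r *)
Definition rminus (r : {set V}) : {set V} := \bigcup_(v in r) down v.

(* <S>_{P restricted to V0}: the j in V0 such that every descending path
   (inside V0) from j to height 0 meets S.  Descending paths have at most
   n vertices, so lengths k <= n cover all of them. *)
Definition lang (V0 S : {set V}) : {set V} :=
  [set j in V0 | [forall k : 'I_n.+1, forall p : k.-tuple V,
      (path covers j p && all (fun x => x \in V0) p
         && (sh_height P (last j p) == 0%N))
      ==> has (fun x => x \in S) (j :: p)]].

Definition langle (S : {set V}) : {set V} := lang setT S.

End Shrubs.

Definition uS (n : nat) (S : {set 'I_n}) : {mpoly rat[n]} := \sum_(k in S) 'X_k.

Definition fP (n : nat) (P : shrub n) : {fraction {mpoly rat[n]}} :=
  (\prod_(i : 'I_n) ((uS (langle P [set i]))%:F)^-1) *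
  \prod_(r in Ram P)
     ((uS (lang P (~: langle P r) (rminus P r)))%:F
        / (uS (langle P (rminus P r)))%:F).

(* u_j for j in {0,...,n}, with u_0 = -(u_1 + ... + u_n) *)
Definition uvar (n : nat) (j : 'I_n.+1) : {mpoly rat[n]} :=
  if unlift ord0 j is Some i then 'X_i else - \sum_(i < n) 'X_i.

(* the ring endomorphism u_j |-> u_{s j} (j = 1..n) of Q[u_1..u_n] *)
Definition sigma_poly (n : nat) (s : 'S_n.+1) (p : {mpoly rat[n]}) :
  {mpoly rat[n]} := p \mPo [tuple uvar (s (lift ord0 i)) | i < n].

Definition sigma_act (n : nat) (s : 'S_n.+1) (x : {fraction {mpoly rat[n]}}) :
  {fraction {mpoly rat[n]}} :=
  let r := generic_quotient.repr x in (sigma_poly s \n_r)%:F / (sigma_poly s \d_r)%:F.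

Definition sgn (n : nat) (e : bool) : {fraction {mpoly rat[n]}} := (-1) ^+ e.

(* Main.v *)
Require Import Defs.
From HB Require Import structures.
From mathcomp Require Import all_boot all_order all_algebra all_fingroup.
From mathcomp Require Import mpoly ring.
Set Implicit Arguments. Unset Strict Implicit. Unset Printing Implicit Defensive.
Import GRing.Theory.
Local Open Scope ring_scope.

Section Dvd.
Variable T : idomainType.
Definition dv (a b : T) := exists q, b = a * q.
Definition primel (L : T) :=
  L != 0 /\ ~ dv L 1 /\ forall a b, dv L (a * b) -> dv L a \/ dv L b.

Lemma dv_refl a : dv a a. Proof. by exists 1; rewrite mulr1. Qed.
Lemma dv0 a : dv a 0. Proof. by exists 0; rewrite mulr0. Qed.
Lemma dvD L a b : dv L a -> dv L b -> dv L (a + b).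
Proof. by move=> [q ->] [q' ->]; exists (q + q'); rewrite mulrDr. Qed.
Lemma dvN L a : dv L a -> dv L (- a).
Proof. by move=> [q ->]; exists (- q); rewrite mulrN. Qed.
Lemma dvMl L a b : dv L b -> dv L (a * b).
Proof. by move=> [q ->]; exists (a * q); rewrite mulrCA. Qed.
Lemma dvMr L a b : dv L a -> dv L (a * b).
Proof. by move=> [q ->]; exists (q * b); rewrite mulrA. Qed.
Lemma dv_trans a b c : dv a b -> dv b c -> dv a c.
Proof. by move=> [q ->] [q' ->]; exists (q * q'); rewrite mulrA. Qed.

Lemma dv_sum L (I : Type) (r : seq I) (P : pred I) (F : I -> T) :
  (forall i, P i -> dv L (F i)) -> dv L (\sum_(i <- r | P i) F i).
Proof.
move=> H; elim/big_rec: _ => [|i x Pi Hx]; first exact: dv0.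
by apply: dvD => //; apply: H.
Qed.

Lemma prime_prod L (s : seq T) : primel L -> (forall a, a \in s -> ~ dv L a) ->
  ~ dv L (\prod_(a <- s) a).
Proof.
move=> [L0 [L1 pL]]; elim: s => [|a s IH] H; first by rewrite big_nil.
rewrite big_cons => /pL [|]; first by apply: H; rewrite mem_head.
by apply: IH => b bs; apply: H; rewrite inE bs orbT.
Qed.

Lemma peel (s : seq T) N B : (forall L, L \in s -> primel L /\ ~ dv L N) ->
  dv (\prod_(L <- s) L) (N * B) -> dv (\prod_(L <- s) L) B.
Proof.
elim: s B => [|L s IH] B H; first by rewrite big_nil => _; exists B; rewrite mul1r.
have [[L0 [_ pL]] nLN] := H L (mem_head _ _).
rewrite big_cons => hd.
have : dv L (N * B) by apply: dv_trans hd; apply: dvMr; apply: dv_refl.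
case/pL => // -[B1 eB]; subst B.
have : dv (\prod_(L <- s) L) B1.
  apply: IH => [L' L's|]; first by apply: H; rewrite inE L's orbT.
  case: hd => q; rewrite mulrCA -mulrA => /(mulfI L0) eq; exists q; exact: eq.
by case=> q ->; exists q; rewrite mulrA.
Qed.

End Dvd.

Section Poly.
Variable n : nat.
Local Notation R := {mpoly rat[n]}.

Lemma compX_tuple (f : 'I_n -> R) i : 'X_i \mPo [tuple f j | j < n] = f i.
Proof. by rewrite comp_mpolyXU -tnth_nth tnth_mktuple. Qed.

Lemma mcoeff_uS (S : {set 'I_n}) j : (uS S)@_U_(j) = (j \in S)%:R.
Proof.
rewrite /uS raddf_sum /=.
under eq_bigr do rewrite mcoeffXU.
case: (boolP (j \in S)) => jS.
  rewrite (bigD1 j) //= eqxx big1 ?addr0 // => i /andP [_ /negbTE ->]; done.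
by rewrite big1 // => i iS; case: eqP => // ei; move: jS; rewrite -ei iS.
Qed.

Lemma uSB_eq0 (A B : {set 'I_n}) : uS A - uS B = 0 -> A = B.
Proof.
move=> /eqP; rewrite subr_eq0 => /eqP e; apply/setP => j.
have := congr1 (mcoeff U_(j)) e; rewrite !mcoeff_uS.
by case: (j \in A); case: (j \in B) => //= /eqP; rewrite ?oner_eq0 // eq_sym oner_eq0.
Qed.

Lemma uS_eq0 (A : {set 'I_n}) : (uS A == 0) = (A == set0).
Proof.
apply/eqP/eqP => [e|->]; last by rewrite /uS big_set0.
apply: uSB_eq0; by rewrite e /uS big_set0 subr0.
Qed.


Section Theta.
Variables (S : {set 'I_n}) (k : 'I_n).
Hypothesis kS : k \in S.
Definition tht : n.-tuple R := [tuple (if i == k then - uS (S :\ k) else 'X_i) | i < n].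
Definition theta (p : R) := p \mPo tht.

Lemma theta_uS_gen (T : {set 'I_n}) :
  theta (uS T) = if k \in T then uS (T :\ k) - uS (S :\ k) else uS T.
Proof.
rewrite /theta /uS raddf_sum /=.
under eq_bigr do rewrite compX_tuple.
case: ifP => kT.
  rewrite (bigD1 k) //= eqxx addrC; congr (_ + _).
  rewrite [in RHS]big_mkcond [in LHS]big_mkcond; apply: eq_bigr => i _.
  by rewrite in_setD1 andbC; case: (i \in T) => //=; case: eqP.
by apply: eq_bigr => i iT; case: eqP => // ei; move: kT; rewrite -ei iT.
Qed.

Lemma theta_uS : theta (uS S) = 0.
Proof. by rewrite theta_uS_gen kS subrr. Qed.

Lemma theta_dvd (A : R) : dv (uS S) (A - theta A).
Proof.
have -> : A - theta A = \sum_(m <- msupp A) (A@_m *: 'X_[m] - theta (A@_m *: 'X_[m])).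
  by rewrite sumrB /theta -raddf_sum -mpolyE.
apply: dv_sum => m _; rewrite /theta.
rewrite comp_mpolyZ -scalerBr.
have -> : forall c (x : R), c *: x = c%:MP * x by move=> c x; rewrite mul_mpolyC.
apply: dvMl; rewrite comp_mpolyX mpolyXE_id.
pose Rel (a b : R) := dv (uS S) (a - b).
apply: (@big_ind2 _ _ Rel) => [|a a' b b' h1 h2|i _].
- by rewrite /Rel subrr; apply: dv0.
- rewrite /Rel.
  have -> : a * b - a' * b' = a * (b - b') + (a - a') * b' by rewrite mulrBr mulrBl addrA subrK.
  by apply: dvD; [apply: dvMl|apply: dvMr].
- elim: (m i) => [|e IH]; first by rewrite /Rel !expr0 subrr; apply: dv0.
  rewrite /Rel !exprS.
  have -> : forall a b a' b' : R, a * b - a' * b' = a * (b - b') + (a - a') * b'.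
    by move=> a b a' b'; rewrite mulrBr mulrBl addrA subrK.
  apply: dvD; first exact: dvMl.
  apply: dvMr; rewrite tnth_mktuple; case: eqP => [->|_]; last by rewrite subrr; apply: dv0.
  rewrite opprK.
  have -> : 'X_k + uS (S :\ k) = uS S.
    by rewrite /uS [in RHS](bigD1 k) //=; congr (_ + _); apply: eq_bigl => j; rewrite in_setD1 andbC.
  exact: dv_refl.
Qed.

Lemma dv_theta (A : R) : dv (uS S) A <-> theta A = 0.
Proof.
split=> [[q ->]|h].
  by rewrite /theta rmorphM /= -/(theta _) theta_uS mul0r.
by have := theta_dvd A; rewrite h subr0.
Qed.

Lemma prime_uS : primel (uS S).
Proof.
split; first by rewrite uS_eq0; apply/set0Pn; exists k.
split.
  by move/dv_theta; rewrite /theta rmorph1 => /eqP; rewrite oner_eq0.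
move=> a b /dv_theta; rewrite /theta rmorphM /= => /eqP; rewrite mulf_eq0.
by case/orP => /eqP h; [left|right]; apply/dv_theta.
Qed.

Lemma ndv_uS (T : {set 'I_n}) : T != set0 -> T != S -> ~ dv (uS S) (uS T).
Proof.
move=> T0 TS /dv_theta; rewrite theta_uS_gen; case: ifP => kT.
  move/uSB_eq0 => e; move/eqP: TS; apply.
  by rewrite -(setD1K kT) -(setD1K kS) e.
by move/eqP; rewrite uS_eq0 (negbTE T0).
Qed.
End Theta.

Lemma prime_uS0 (S : {set 'I_n}) : S != set0 -> primel (uS S).
Proof. by case/set0Pn => k kS; apply: (prime_uS kS). Qed.

Lemma ndv_uS0 (S T : {set 'I_n}) : S != set0 -> T != set0 -> T != S -> ~ dv (uS S) (uS T).
Proof. by case/set0Pn => k kS; apply: (ndv_uS kS). Qed.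

End Poly.

Section Sigma.
Variable n : nat.
Local Notation R := {mpoly rat[n]}.

Lemma comp_mpolyA (p : R) (lf lg : n.-tuple R) :
  (p \mPo lf) \mPo lg = p \mPo [tuple (tnth lf i \mPo lg) | i < n].
Proof.
rewrite [p]mpolyE (raddf_sum (comp_mpoly lf)) !raddf_sum; apply: eq_bigr => m _ /=.
rewrite !comp_mpolyZ !comp_mpolyX rmorph_prod; congr (_ *: _).
by apply: eq_bigr => i _; rewrite rmorphXn tnth_mktuple.
Qed.

Lemma sum_uvar : \sum_(j < n.+1) uvar j = 0 :> R.
Proof.
rewrite big_ord_recl /uvar unlift_none.
rewrite [X in _ + X](eq_bigr (fun i => 'X_i)) ; last by move=> i _; rewrite liftK.
exact: addNr.
Qed.

Lemma sigma_X (s : 'S_n.+1) i : sigma_poly s 'X_i = uvar (s (lift ord0 i)).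
Proof. by rewrite /sigma_poly compX_tuple. Qed.

Lemma sigma_uvar (s : 'S_n.+1) j : sigma_poly s (uvar j) = uvar (s j).
Proof.
case: (unliftP ord0 j) => [i ->|->].
  by rewrite {1}/uvar liftK sigma_X.
rewrite {1}/uvar unlift_none /sigma_poly comp_mpolyN (raddf_sum (comp_mpoly _)) /=.
under eq_bigr do rewrite compX_tuple.
have := sum_uvar; rewrite (reindex_inj (@perm_inj _ s)) /= big_ord_recl.
by move/eqP; rewrite addr_eq0 => /eqP ->.
Qed.

Lemma sigma_comp (s t : 'S_n.+1) (p : R) : sigma_poly t (sigma_poly s p) = sigma_poly (s * t) p.
Proof.
rewrite {1}/sigma_poly {2}/sigma_poly comp_mpolyA /sigma_poly; congr comp_mpoly.
by apply: eq_from_tnth => i; rewrite !tnth_mktuple -/(sigma_poly t _) sigma_uvar permM.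
Qed.

Lemma sigma1 (p : R) : sigma_poly 1 p = p.
Proof.
rewrite /sigma_poly -[RHS]comp_mpoly_id; congr comp_mpoly.
by apply: eq_from_tnth => i; rewrite !tnth_mktuple perm1 /uvar liftK.
Qed.

Lemma sigmaK (s : 'S_n.+1) (p : R) : sigma_poly s^-1 (sigma_poly s p) = p.
Proof. by rewrite sigma_comp mulgV sigma1. Qed.

Lemma sigmaKV (s : 'S_n.+1) (p : R) : sigma_poly s (sigma_poly s^-1 p) = p.
Proof. by rewrite sigma_comp mulVg sigma1. Qed.

Lemma sigmaM (s : 'S_n.+1) (p : R) q : sigma_poly s (p * q) = sigma_poly s p * sigma_poly s q.
Proof. by rewrite /sigma_poly rmorphM. Qed.
Lemma sigma1r (s : 'S_n.+1) : sigma_poly s 1 = 1.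
Proof. by rewrite /sigma_poly rmorph1. Qed.
Lemma sigmaN (s : 'S_n.+1) (p : R) : sigma_poly s (- p) = - sigma_poly s p.
Proof. by rewrite /sigma_poly raddfN. Qed.
Lemma sigma0 (s : 'S_n.+1) : sigma_poly s 0 = 0.
Proof. by rewrite /sigma_poly raddf0. Qed.

Lemma sigma_inj (s : 'S_n.+1) : injective (sigma_poly s).
Proof. by move=> p q e; rewrite -(sigmaK s p) e sigmaK. Qed.

Lemma sigma_eq0 (s : 'S_n.+1) (p : R) : (sigma_poly s p == 0) = (p == 0).
Proof. by apply/eqP/eqP => [e|->]; [rewrite -(sigmaK s p) e; exact: sigma0|exact: sigma0]. Qed.

Lemma sigma_prod (s : 'S_n.+1) (l : seq R) :
  sigma_poly s (\prod_(a <- l) a) = \prod_(a <- l) sigma_poly s a.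
Proof. by rewrite /sigma_poly rmorph_prod. Qed.

Lemma sigma_dv (s : 'S_n.+1) (a b : R) : dv a b -> dv (sigma_poly s a) (sigma_poly s b).
Proof. by case=> q ->; exists (sigma_poly s q); rewrite sigmaM. Qed.

Lemma sigma_dvV (s : 'S_n.+1) (a b : R) : dv (sigma_poly s a) (sigma_poly s b) -> dv a b.
Proof. by move/(sigma_dv s^-1); rewrite !sigmaK. Qed.

Lemma sigma_prime (s : 'S_n.+1) (L : R) : primel L -> primel (sigma_poly s L).
Proof.
move=> [L0 [L1 pL]]; split; first by rewrite sigma_eq0.
split; first by rewrite -(sigma1r s) => /sigma_dvV.
move=> a b; rewrite -(sigmaKV s a) -(sigmaKV s b) -sigmaM => /sigma_dvV /pL.
by case=> /(sigma_dv s) h; [left|right].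
Qed.

End Sigma.

Section Size.
Variable n : nat.
Local Notation R := {mpoly rat[n]}.

Lemma msizeXi (i : 'I_n) : msize ('X_i : R) = 2%N.
Proof. by rewrite msizeX mdeg1. Qed.

Lemma msum_le (T : Type) (r : seq T) (P : pred T) (F : T -> R) :
  (forall i, P i -> msize (F i) <= 2)%N -> (msize (\sum_(i <- r | P i) F i) <= 2)%N.
Proof.
move=> H; apply: leq_trans (@msize_sum n rat T r F P) _.
by elim/big_rec: _ => [//|i x Pi Hx]; rewrite geq_max H.
Qed.

Lemma msize_uS_le (S : {set 'I_n}) : (msize (uS S) <= 2)%N.
Proof. by apply: msum_le => i _; rewrite msizeXi. Qed.

Lemma msize_uvar_le (j : 'I_n.+1) : (msize (uvar j : R) <= 2)%N.
Proof.
rewrite /uvar; case: unlift => [i|]; first by rewrite msizeXi.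
by rewrite msizeN; apply: msum_le => i _; rewrite msizeXi.
Qed.

Lemma msize_uS (S : {set 'I_n}) : S != set0 -> msize (uS S) = 2%N.
Proof.
case/set0Pn => k kS; apply/eqP; rewrite eqn_leq msize_uS_le /=.
have : U_(k)%MM \in msupp (uS S) by rewrite -[_ \in _]negbK -mcoeff_eq0 mcoeff_uS kS oner_eq0.
by move/msize_mdeg_lt; rewrite mdeg1.
Qed.

Lemma msize_sigma_uS (s : 'S_n.+1) (S : {set 'I_n}) : S != set0 ->
  msize (sigma_poly s (uS S)) = 2%N.
Proof.
move=> S0; apply/eqP; rewrite eqn_leq; apply/andP; split.
  rewrite /uS /sigma_poly (raddf_sum (comp_mpoly _)) /=; apply: msum_le => i _.
  by rewrite compX_tuple msize_uvar_le.
rewrite ltnNge; apply/negP => /msize1_polyC e.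
have := msize_uS S0; rewrite -(sigmaK s (uS S)) e /sigma_poly comp_mpolyC.
by move=> h; have := msizeC n (sigma_poly s (uS S))@_0; rewrite h; case: (_ != 0).
Qed.

Lemma msize_prod2 (l : seq R) : (forall a, a \in l -> msize a = 2%N) ->
  msize (\prod_(a <- l) a) = (size l).+1.
Proof.
elim: l => [|a l IH] H; first by rewrite big_nil msize1.
have ha : msize a = 2%N by apply: H; rewrite mem_head.
have hl : msize (\prod_(a <- l) a) = (size l).+1.
  by apply: IH => b bl; apply: H; rewrite inE bl orbT.
rewrite big_cons msizeM ?ha ?hl //.
  by rewrite -msize_poly_eq0 ha.
by rewrite -msize_poly_eq0 hl.
Qed.

Lemma dv_msize (a b : R) : b != 0 -> dv a b -> (msize a <= msize b)%N.
Proof.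
move=> b0 [q e]; move: b0; rewrite e mulf_eq0 negb_or => /andP [a0 q0].
rewrite msizeM //; have : (0 < msize q)%N by rewrite lt0n msize_poly_eq0.
by case: (msize q) => // m _; rewrite addnS /= leq_addr.
Qed.

End Size.

Section Frac.
Variable T : idomainType.
Lemma frac_repr (x : {fraction T}) :
  x = (\n_(generic_quotient.repr x))%:F / (\d_(generic_quotient.repr x))%:F.
Proof.
set r := generic_quotient.repr x.
have hd : \d_r != 0 := denom_ratioP _.
apply: (@mulIf _ ((\d_r)%:F)); first by rewrite tofrac_eq0.
rewrite mulfVK ?tofrac_eq0 //.
rewrite -[x]generic_quotient.reprK -/r.
rewrite !generic_quotient.piE.
apply/generic_quotient.eqmodP; rewrite /= FracField.equivfE /FracField.mulf /=.
rewrite !numden_Ratio ?mulf_neq0 ?oner_neq0 //.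
by rewrite !mulr1 mulrC.
Qed.

Lemma frac_eq (a b a' b' : T) : b != 0 -> b' != 0 ->
  a%:F / b%:F = a'%:F / b'%:F -> a * b' = a' * b.
Proof.
move=> b0 b'0 e; apply/eqP; rewrite -tofrac_eq !tofracM; apply/eqP.
have hb : b%:F != 0 :> {fraction T} by rewrite tofrac_eq0.
have hb' : b'%:F != 0 :> {fraction T} by rewrite tofrac_eq0.
apply: (@mulIf _ (b%:F)^-1); first by rewrite invr_eq0.
apply: (@mulIf _ (b'%:F)^-1); first by rewrite invr_eq0.
by rewrite mulfK // mulrAC mulfK.
Qed.
End Frac.

Section SigmaAct.
Variable n : nat.
Local Notation R := {mpoly rat[n]}.

Lemma sigma_act_frac (s : 'S_n.+1) (a b : R) : b != 0 ->
  sigma_act s (a%:F / b%:F) = (sigma_poly s a)%:F / (sigma_poly s b)%:F.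
Proof.
move=> b0; rewrite /sigma_act.
set x := a%:F / b%:F.
set r := generic_quotient.repr x.
have hd : \d_r != 0 := denom_ratioP _.
have := frac_repr x; rewrite -/r /x => /esym /frac_eq.
move=> /(_ hd b0) e.
have e' := congr1 (sigma_poly s) e; rewrite !sigmaM in e'.
apply/eqP; rewrite eq_sym; apply/eqP.
have sb : sigma_poly s b != 0 by rewrite sigma_eq0.
have sd : sigma_poly s \d_r != 0 by rewrite sigma_eq0.
apply: (@mulIf _ ((sigma_poly s b)%:F)); first by rewrite tofrac_eq0.
rewrite mulfVK ?tofrac_eq0 //.
apply: (@mulIf _ ((sigma_poly s \d_r)%:F)); first by rewrite tofrac_eq0.
rewrite mulrAC mulfVK ?tofrac_eq0 // -!tofracM; congr tofrac.
by rewrite mulrC e' mulrC.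
Qed.
End SigmaAct.

Section Assembly.
Variable n : nat.
Local Notation R := {mpoly rat[n]}.

Definition Nr (P : shrub n) r := lang P (~: langle P r) (rminus P r).
Definition NL (P : shrub n) : seq R := [seq uS (Nr P r) | r <- enum (Ram P)].
Definition DL (P : shrub n) : seq {set 'I_n} :=
  [seq langle P [set i] | i <- enum 'I_n] ++ [seq langle P (rminus P r) | r <- enum (Ram P)].
Definition Num P : R := \prod_(a <- NL P) a.
Definition Den P : R := \prod_(S <- DL P) uS S.

Lemma fP_frac P : fP P = (Num P)%:F / (Den P)%:F.
Proof.
rewrite /fP /Num /Den /NL /DL big_cat !big_map /= !big_enum /=.
rewrite tofracM invfM !rmorph_prod /= !prodfV.
rewrite mulrCA; congr (_ * _).
rewrite -prodfV -big_split /=; apply: eq_bigr => r _.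
by [].
Qed.

Section Comb.
Variable Q : shrub n.
Hypothesis K1 : forall S, S \in DL Q -> S != set0.
Hypothesis K2 : forall r, r \in Ram Q -> Nr Q r != set0.
Hypothesis K3 : forall r S, r \in Ram Q -> S \in DL Q -> Nr Q r != S.

Lemma size_DL : size (DL Q) = (n + #|Ram Q|)%N.
Proof. by rewrite /DL size_cat !size_map -cardE -enumT size_enum_ord. Qed.

Lemma msize_Den : msize (Den Q) = (n + #|Ram Q|).+1.
Proof.
rewrite /Den -size_DL -(big_map (@uS n) predT id) msize_prod2 ?size_map //.
by move=> a /mapP [S SD ->]; rewrite msize_uS // K1.
Qed.

Lemma Den_neq0 : Den Q != 0.
Proof. by rewrite -msize_poly_eq0 msize_Den. Qed.

Lemma ndv_Num S : S \in DL Q -> ~ dv (uS S) (Num Q).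
Proof.
move=> SD; apply: prime_prod; first exact: prime_uS0 (K1 SD).
move=> a /mapP [r]; rewrite mem_enum => rR ->.
by apply: ndv_uS0; [apply: K1|apply: K2|apply: K3].
Qed.

Lemma msize_sDen (s : 'S_n.+1) : msize (sigma_poly s (Den Q)) = (n + #|Ram Q|).+1.
Proof.
rewrite /Den -size_DL -(big_map (@uS n) predT id) sigma_prod -(big_map (sigma_poly s) predT id).
rewrite msize_prod2 ?size_map //.
by move=> a /mapP [b /mapP [S SD ->] ->]; rewrite msize_sigma_uS // K1.
Qed.
End Comb.

Definition combOK (Q : shrub n) :=
  [/\ forall S, S \in DL Q -> S != set0,
      forall r, r \in Ram Q -> Nr Q r != set0 &
      forall r S, r \in Ram Q -> S \in DL Q -> Nr Q r != S].

Lemma main_comb (s : 'S_n.+1) (e e' : bool) (P P' : shrub n) :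
  combOK P -> combOK P' ->
  sigma_act s (sgn n e * fP P) = sgn n e' * fP P' -> #|Ram P| = #|Ram P'|.
Proof.
case=> K1 K2 K3 [K1' K2' K3'] H.
pose c (b : bool) : R := (-1) ^+ b.
have sg b : sgn n b = (c b)%:F by rewrite /sgn /c tofracXn tofracN tofrac1.
have cc b : c b * c b = 1 by rewrite /c; case: b; rewrite ?expr0 ?expr1 ?mulr1 ?mulrNN ?mulr1.
have sc b : sigma_poly s (c b) = c b.
  by rewrite /c /sigma_poly rmorphXn rmorphN1.
have D0 := Den_neq0 K1; have D0' := Den_neq0 K1'.
rewrite !fP_frac !sg !mulrA -!tofracM sigma_act_frac // sigmaM sc in H.
have E := frac_eq _ _ H; move: E; rewrite sigma_eq0 => /(_ D0 D0') E.
have h1 : dv (Den P') (Num P' * sigma_poly s (Den P)).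
  exists (c e' * c e * sigma_poly s (Num P)).
  rewrite -[LHS]mul1r -(cc e').
  have -> : c e' * c e' * (Num P' * sigma_poly s (Den P)) = c e' * (c e' * Num P' * sigma_poly s (Den P)) by ring.
  rewrite -E; ring.
have h2 : dv (sigma_poly s (Den P)) (sigma_poly s (Num P) * Den P').
  exists (c e * c e' * Num P').
  rewrite -[LHS]mul1r -(cc e).
  have -> : c e * c e * (sigma_poly s (Num P) * Den P') = c e * (c e * sigma_poly s (Num P) * Den P') by ring.
  rewrite E; ring.
have d1 : dv (Den P') (sigma_poly s (Den P)).
  move: h1; rewrite /Den -!(big_map (@uS n) predT id).
  apply: peel => L /mapP [S SD ->]; split; first exact: prime_uS0 (K1' _ SD).
  exact: ndv_Num.
have d2 : dv (sigma_poly s (Den P)) (Den P').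
  move: h2; rewrite /Den -!(big_map (@uS n) predT id) sigma_prod -(big_map (sigma_poly s) predT id).
  apply: peel => L /mapP [b /mapP [S SD ->] ->]; split.
    exact: sigma_prime (prime_uS0 (K1 _ SD)).
  by move/sigma_dvV; apply: ndv_Num.
have sD0 : sigma_poly s (Den P) != 0 by rewrite sigma_eq0.
have l1 := dv_msize sD0 d1; have l2 := dv_msize D0' d2.
rewrite (msize_Den K1') (msize_sDen K1 s) in l1.
rewrite (msize_Den K1') (msize_sDen K1 s) in l2.
move: l1 l2; rewrite !ltnS => l1 l2; apply/eqP; by rewrite -(eqn_add2l n) eqn_leq l1 l2.
Qed.

End Assembly.

Local Close Scope ring_scope.

Section Comb.
Variable n : nat.
Variable P : shrub n.
Local Notation h := (sh_height P).
Local Notation cov := (covers P).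

Lemma covH j i : cov j i -> h j = (h i).+1.
Proof. by case/andP => _ /eqP. Qed.

Lemma path_lt j p x : path cov j p -> x \in p -> h x < h j.
Proof.
elim: p j => [|y p IH] j //= /andP [cy pp]; rewrite inE => /orP [/eqP ->|xp].
  by rewrite (covH cy).
by rewrite (covH cy) ltnS ltnW // IH.
Qed.

Lemma path_le j p x : path cov j p -> x \in j :: p ->
  (h x <= h j) && ((h x == h j) ==> (x == j)).
Proof.
move=> pp; rewrite inE => /orP [/eqP ->|xp]; first by rewrite !eqxx leqnn.
have := path_lt pp xp; rewrite ltn_neqAle => /andP [hn hl].
by rewrite hl (negbTE hn).
Qed.

Lemma path_uniq j p : path cov j p -> uniq (j :: p).
Proof.
elim: p j => [|y p IH] j //= /andP [cy pp].
have u := IH _ pp; rewrite [uniq _]cons_uniq in u |- *; rewrite u andbT inE negb_or; apply/andP; split.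
  by apply/eqP => ejy; move: (covH cy); rewrite ejy => /eqP; rewrite -addn1 -{1}[h y]addn0 eqn_add2l.
by apply/negP => /(path_lt pp); rewrite (covH cy) ltnNge leqnSn.
Qed.

Lemma size_path j p : path cov j p -> size p < n.+1.
Proof.
move/path_uniq/card_uniqP => e; have := max_card (mem (j :: p)).
by rewrite e card_ord /= ltnS => /ltnW.
Qed.

Lemma ex_path j : exists p, path cov j p && (h (last j p) == 0).
Proof.
move: {2}(h j) (leqnn (h j)) => m; elim: m j => [|m IH] j hj.
  by exists [::]; rewrite /= -leqn0.
case: (posnP (h j)) => [hj0|/sh_ax2 [i ci]]; first by exists [::]; rewrite /= hj0.
have ci' : cov j i by [].
have [p /andP [pp lp]] : exists p, path cov i p && (h (last i p) == 0).
  by apply: IH; move: hj; rewrite (covH ci') ltnS.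
by exists (i :: p); rewrite /= ci' pp lp.
Qed.

Lemma lang_mem (V0 S : {set 'I_n}) j p : j \in lang P V0 S -> path cov j p ->
  all (fun x => x \in V0) p -> h (last j p) == 0 -> has (fun x => x \in S) (j :: p).
Proof.
rewrite inE => /andP [_ /forallP H] pp ap lp.
have sz := size_path pp.
move: (H (Ordinal sz)) => /forallP /(_ (in_tuple p)) /implyP; apply.
by rewrite /= pp ap lp.
Qed.

Lemma lang_intro (V0 S : {set 'I_n}) j : j \in V0 ->
  (forall p, path cov j p -> all (fun x => x \in V0) p -> h (last j p) == 0 ->
     has (fun x => x \in S) (j :: p)) -> j \in lang P V0 S.
Proof.
move=> jV H; rewrite inE jV /=; apply/forallP => k; apply/forallP => p.
by apply/implyP => /andP [/andP [a b] c]; apply: H.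
Qed.

Lemma self_lang (V0 S : {set 'I_n}) j : j \in V0 -> j \in S -> j \in lang P V0 S.
Proof. by move=> jV jS; apply: lang_intro => // p _ _ _; rewrite /= jS. Qed.

Lemma lang_sub (V0 S : {set 'I_n}) j : j \in lang P V0 S -> j \in V0.
Proof. by rewrite inE => /andP []. Qed.

Lemma lang_out (S : {set 'I_n}) j : j \notin langle P S -> exists p,
  [/\ path cov j p, h (last j p) == 0 & ~~ has (fun x => x \in S) (j :: p)].
Proof.
rewrite inE in_setT /= => /forallPn [k /forallPn [p]].
by rewrite negb_imply => /andP [/andP [/andP [a _] c] d]; exists p.
Qed.

Lemma notin_path (S : {set 'I_n}) j : j \notin langle P S -> exists p,
  [/\ path cov j p, h (last j p) == 0, ~~ has (fun x => x \in S) (j :: p)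
    & all (fun x => x \in ~: langle P S) p].
Proof.
case/lang_out => p [pp lp hp]; exists p; split => //.
apply/allP => x xp; rewrite inE; apply/negP => xl.
case/splitPr: xp pp lp hp xl => p1 p2.
rewrite cat_path last_cat /= => /andP [_ /andP [_ pp2]] lp hp xl.
have := lang_mem xl pp2 _ lp.
rewrite (_ : all _ p2 = true); last by apply/allP => y _; rewrite in_setT.
move=> /(_ isT) hx; move: hp; rewrite /= has_cat.
by move: hx => /= ->; rewrite !orbT.
Qed.

Lemma langle_low (T : {set 'I_n}) x : x \in langle P T ->
  exists2 y, y \in T & (h y <= h x) && ((h y == h x) ==> (y == x)).
Proof.
move=> xl; have [p /andP [pp lp]] := ex_path x.
have := lang_mem xl pp _ lp.
rewrite (_ : all _ p = true); last by apply/allP => y _; rewrite in_setT.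
case/(_ isT)/hasP => y yp yT; exists y => //; exact: path_le pp yp.
Qed.


Definition rv v := [set w | ramified P w && (down P w == down P v)].

Lemma Ram_rv r : r \in Ram P -> exists2 v, ramified P v & r = rv v.
Proof. by case/imsetP => v; rewrite inE => rv ->; exists v. Qed.

Section Rv.
Variable v : 'I_n.
Hypothesis ramv : ramified P v.

Lemma down_ex : exists b, b \in down P v.
Proof. by apply/card_gt0P; apply: ltnW. Qed.

Lemma down2 : exists b c, [/\ b \in down P v, c \in down P v & b != c].
Proof. exact/card_gt1P. Qed.

Lemma down_h b : b \in down P v -> h v = (h b).+1.
Proof. by rewrite inE => /covH. Qed.

Lemma rminus_rv : rminus P (rv v) = down P v.
Proof.
apply/setP => x; rewrite /rminus; apply/bigcupP/idP => [[w] |xd].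
  by rewrite inE => /andP [_ /eqP ->].
by exists v => //; rewrite inE ramv eqxx.
Qed.

Lemma rv_h w : w \in rv v -> h w = h v.
Proof.
rewrite inE => /andP [_ /eqP e]; have [b bd] := down_ex.
by rewrite (down_h bd); move: bd; rewrite -e inE => /covH.
Qed.

Lemma down_notin b : b \in down P v -> b \notin langle P (rv v).
Proof.
move=> bd; apply/negP => /langle_low [y /rv_h hy /andP [hl _]].
by move: hl; rewrite hy (down_h bd) ltnn.
Qed.

Lemma down_Nr b : b \in down P v -> b \in lang P (~: langle P (rv v)) (rminus P (rv v)).
Proof.
move=> bd; apply: self_lang; first by rewrite inE down_notin.
by rewrite rminus_rv.
Qed.

Lemma Nr_low x : x \in lang P (~: langle P (rv v)) (rminus P (rv v)) ->
  exists2 y, y \in down P v & (h y <= h x) && ((h y == h x) ==> (y == x)).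
Proof.
move=> xN; have := lang_sub xN; rewrite inE => /notin_path [p [pp lp _ ap]].
have := lang_mem xN pp ap lp; rewrite rminus_rv => /hasP [y yp yd].
by exists y => //; apply: path_le pp yp.
Qed.

Lemma v_langle : v \in langle P (down P v).
Proof.
apply: lang_intro; first by rewrite in_setT.
case=> [|y p] /=.
  have [b bd] := down_ex; by rewrite (down_h bd).
by case/andP => cy _ _ _; rewrite !inE cy orbT.
Qed.

End Rv.
End Comb.

Local Open Scope ring_scope.
Local Close Scope ring_scope.

Section Claims.
Variable n : nat.
Variable P : shrub n.
Local Notation h := (sh_height P).

Lemma hdown v b c : ramified P v -> b \in down P v -> c \in down P v -> h b = h c.
Proof. by move=> rv bd cd; apply: succn_inj; rewrite -(down_h bd) -(down_h cd). Qed.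

Lemma NrA v i : ramified P v -> Nr P (rv P v) != langle P [set i].
Proof.
move=> ramv; apply/eqP; rewrite /Nr => E.
have [b [c [bd cd bc]]] := down2 ramv.
have key : forall x, x \in down P v -> x = i.
  move=> x xd; have := down_Nr ramv xd; rewrite E => /langle_low [y].
  rewrite inE => /eqP -> /andP [hix hixe].
  have iN : i \in lang P (~: langle P (rv P v)) (rminus P (rv P v)).
    by rewrite E; apply: self_lang; rewrite ?in_setT ?inE.
  have [z yd /andP [hyi _]] := Nr_low ramv iN.
  have hy : h z = h x by apply: hdown ramv yd xd.
  have : h i == h x by rewrite eqn_leq hix -hy hyi.
  by move/(implyP hixe)/eqP.
by move: bc; rewrite (key b bd) (key c cd) eqxx.
Qed.

Lemma NrB v v' : ramified P v -> ramified P v' ->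
  Nr P (rv P v) != langle P (rminus P (rv P v')).
Proof.
move=> ramv ramv'; apply/eqP; rewrite /Nr (rminus_rv ramv') => E.
have [b bd] := down_ex ramv; have [b' b'd] := down_ex ramv'.
have h1 : h b' <= h b.
  have := down_Nr ramv bd; rewrite E => /langle_low [y yd /andP [hy _]].
  by rewrite (hdown ramv' b'd yd).
have h2 : h b <= h b'.
  have : b' \in langle P (down P v') by apply: self_lang; rewrite ?in_setT.
  rewrite -E => /Nr_low -/(_ ramv) [y yd /andP [hy _]].
  by rewrite (hdown ramv bd yd).
have hbb : h b = h b' by apply/eqP; rewrite eqn_leq h1 h2.
have dd : down P v = down P v'.
  apply/setP => x; apply/idP/idP => xd.
    have := down_Nr ramv xd; rewrite E => /langle_low [y yd /andP [_ hy]].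
    move: hy; rewrite (hdown ramv' yd b'd) -hbb (hdown ramv bd xd) eqxx /=.
    by move/eqP <-.
  have : x \in langle P (down P v') by apply: self_lang; rewrite ?in_setT.
  rewrite -E => /Nr_low -/(_ ramv) [y yd /andP [_ hy]].
  move: hy; rewrite (hdown ramv yd bd) hbb (hdown ramv' b'd xd) eqxx /=.
  by move/eqP <-.
have := v_langle ramv; rewrite dd -E => /lang_sub; rewrite inE.
by rewrite self_lang ?in_setT // inE ramv eqxx.
Qed.

Lemma combP : combOK P.
Proof.
have Kr : forall r, r \in Ram P -> exists2 b, b \in rminus P r & b \in Nr P r.
  move=> r /Ram_rv [v ramv ->]; have [b bd] := down_ex ramv.
  by exists b; [rewrite rminus_rv | apply: down_Nr].
split.
- move=> S; rewrite mem_cat => /orP [/mapP [i _ ->]|/mapP [r]].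
    by apply/set0Pn; exists i; apply: self_lang; rewrite ?in_setT ?inE.
  rewrite mem_enum => /Kr [b bm _] ->.
  by apply/set0Pn; exists b; apply: self_lang; rewrite ?in_setT.
- by move=> r /Kr [b _ bN]; apply/set0Pn; exists b.
- move=> r S /Ram_rv [v ramv ->]; rewrite mem_cat => /orP [/mapP [i _ ->]|/mapP [r']].
    exact: NrA.
  by rewrite mem_enum => /Ram_rv [v' ramv' ->] ->; apply: NrB.
Qed.
End Claims.

Local Open Scope ring_scope.

Theorem mainTheorem17 (n : nat) (s : 'S_n.+1) (e e' : bool) (P P' : shrub n) :
  sigma_act s (sgn n e * fP P) = sgn n e' * fP P' ->
  #|Ram P| = #|Ram P'|.
Proof. exact: (main_comb (combP P) (combP P')). Qed.
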